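(* Let $n\geq5$ and let $U$ be a monomial. Then $x_n^2x_{n-2}^2U\in G(J(P_n)^2)$ if and only if $U\in G(J(P_{n-3})^2)$.
   Context: For $m\geq1$, $P_m$ is the path graph on vertices $x_1,\ldots,x_m$ with edges $\{x_i,x_{i+1}\}$; $J(P_m)$ is its cover ideal in a polynomial ring over a field, generated by the monomials $\prod_{x\in C}x$ with $C$ a minimal vertex cover of $P_m$; $G(I)$ denotes the set of minimal monomial generators of a monomial ideal $I$. *)

(* Defs.v *)
From mathcomp Require Import all_boot.
Set Implicit Arguments. Unset Strict Implicit. Unset Printing Implicit Defensive.

(* A monomial x_1^{u 1} ... x_m^{u m} of k[x_1,...,x_m] is represented by its
   exponent vector u : nat -> nat, vanishing outside {1,...,m}. *)
Definition monomial (m : nat) (u : nat -> nat) : Prop :=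
  forall i, u i <> 0 -> 1 <= i <= m.

Definition mdivides (u v : nat -> nat) : Prop := forall i, u i <= v i.

Definition mmul (u v : nat -> nat) : nat -> nat := fun i => u i + v i.

Definition vset (m : nat) (C : nat -> bool) : Prop :=
  forall i, C i -> 1 <= i <= m.

Definition vcover (m : nat) (C : nat -> bool) : Prop :=
  vset m C /\ forall i, 1 <= i < m -> C i || C i.+1.

Definition min_vcover (m : nat) (C : nat -> bool) : Prop :=
  vcover m C /\
  forall C', vcover m C' -> (forall i, C' i -> C i) -> forall i, C' i = C i.

Definition cover_monomial (C : nat -> bool) : nat -> nat := fun i => nat_of_bool (C i).

(* u lies in J(P_m)^2: J(P_m)^2 is the monomial ideal generated by the
   products x_{C1} x_{C2} of two minimal-vertex-cover monomials, so a monomial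
   lies in it iff it is divisible by such a product. *)
Definition in_J2 (m : nat) (u : nat -> nat) : Prop :=
  exists C1 C2, min_vcover m C1 /\ min_vcover m C2 /\
    mdivides (mmul (cover_monomial C1) (cover_monomial C2)) u.

Definition in_G_J2 (m : nat) (u : nat -> nat) : Prop :=
  monomial m u /\ in_J2 m u /\
  forall v, monomial m v -> in_J2 m v -> mdivides v u -> forall i, v i = u i.

Definition xpow (j e : nat) : nat -> nat := fun i => if i == j then e else 0.

(* Main.v *)
Require Import Defs.
From mathcomp Require Import all_boot.
From mathcomp Require Import zify.

Definition extC (m : nat) (D : nat -> bool) : nat -> bool :=
  fun i => D i || (i == m.+1) || (i == m.+3).
Definition resC (m : nat) (C : nat -> bool) : nat -> bool :=
  fun i => (i <= m) && C i.

Lemma L4 m C : min_vcover m.+3 C -> C m.+3 -> C m.+2 = false.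
Proof.
move=> [[Hs Hc] Hmin] H3; apply/negbTE/negP => H2.
pose C' := fun i => C i && (i != m.+3).
have: C' m.+3 = C m.+3.
  apply: Hmin; last by move=> i /andP[].
  split; first by move=> i /andP[/Hs h _].
  move=> i Hi; rewrite /C'.
  case: (eqVneq i m.+2) => [->|ne].
    have h : m.+2 != m.+3 by lia.
    by rewrite H2 h.
  have h1 : i != m.+3 by lia.
  have h2 : i.+1 != m.+3 by lia.
  by rewrite h1 h2 !andbT; apply: Hc.
by rewrite /C' eqxx andbF H3.
Qed.

Lemma L3 m C : min_vcover m.+3 C -> C m.+2 = false -> C m.+1 /\ C m.+3.
Proof.
move=> [[Hs Hc] _] H2.
have := Hc m.+1 ltac:(lia); have := Hc m.+2 ltac:(lia).
by rewrite H2 /= orbF => -> ->.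
Qed.

Lemma Lext m D : min_vcover m D -> min_vcover m.+3 (extC m D).
Proof.
move=> [[Hs Hc] Hmin].
have HD0 : forall i, m < i -> D i = false.
  by move=> i Hi; apply/negbTE/negP => /Hs; lia.
split.
  split.
    move=> i; rewrite /extC; case/orP; [case/orP|]; [move/Hs|move/eqP->|move/eqP->]; lia.
  move=> i Hi; rewrite /extC.
  case: (ltnP i m) => him.
    have := Hc i ltac:(lia); case/orP => ->; by rewrite ?orbT.
  case: (eqVneq i m) => [->|ne]; first by rewrite (eqxx m.+1) !orbT.
  case: (eqVneq i m.+1) => [->|ne1]; first by rewrite !orbT.
  have -> : i = m.+2 by lia.
  by rewrite (eqxx m.+3) !orbT.
move=> C' [Hs' Hc'] Hsub i.
rewrite /extC.
case: (eqVneq i m.+3) => [->|n3].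
  rewrite orbT.
  have := Hc' m.+2 ltac:(lia).
  have e1 : (m.+2 == m.+1) = false by lia.
  have e2 : (m.+2 == m.+3) = false by lia.
  by case/orP => // /Hsub; rewrite /extC HD0 // e1 e2.
case: (eqVneq i m.+1) => [->|n1].
  rewrite orbT.
  have := Hc' m.+1 ltac:(lia).
  have e1 : (m.+2 == m.+1) = false by lia.
  have e2 : (m.+2 == m.+3) = false by lia.
  by case/orP => // /Hsub; rewrite /extC HD0 // e1 e2.
rewrite !orbF.
pose D' := fun j => (j <= m) && C' j.
have HD' : forall j, D' j = D j.
  apply: Hmin.
    split.
      move=> j /andP[h /Hs']; lia.
    move=> j Hj; rewrite /D'.
    have h1 : j <= m by lia.
    have h2 : j < m by lia.
    by rewrite h1 h2 /=; apply: Hc'; lia.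
  move=> j /andP[hj /Hsub]; rewrite /extC.
  have h1 : j != m.+1 by lia.
  have h2 : j != m.+3 by lia.
  by rewrite (negbTE h1) (negbTE h2) !orbF.
case: (leqP i m) => him.
  by rewrite -HD' /D' him.
rewrite HD0 //; apply/negbTE/negP => /Hsub; rewrite /extC HD0 //.
by rewrite (negbTE n1) (negbTE n3).
Qed.

Lemma Lres m C : min_vcover m.+3 C -> C m.+2 = false -> min_vcover m (resC m C).
Proof.
move=> HC H2; have [H1 H3] := L3 m C HC H2.
case: HC => [[Hs Hc] Hmin].
split.
  split.
    move=> i /andP[h /Hs]; lia.
  move=> i Hi; rewrite /resC.
  have h1 : i <= m by lia.
  have h2 : i < m by lia.
  by rewrite h1 h2 /=; apply: Hc; lia.
move=> D' [Hs' Hc'] Hsub.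
have HD0 : forall i, m < i -> D' i = false.
  by move=> i Hi; apply/negbTE/negP => /Hs'; lia.
have HC' : forall i, extC m D' i = C i.
  apply: Hmin.
    split.
      move=> i; rewrite /extC; case/orP; [case/orP|]; [move/Hs'|move/eqP->|move/eqP->]; lia.
    move=> i Hi; rewrite /extC.
    case: (ltnP i m) => him.
      have := Hc' i ltac:(lia); case/orP => ->; by rewrite ?orbT.
    case: (eqVneq i m) => [->|ne]; first by rewrite (eqxx m.+1) !orbT.
    case: (eqVneq i m.+1) => [->|ne1]; first by rewrite !orbT.
    have -> : i = m.+2 by lia.
    by rewrite (eqxx m.+3) !orbT.
  move=> i; rewrite /extC; case/orP; [case/orP|].
  - by move/Hsub => /andP[].
  - by move/eqP->.
  - by move/eqP->.
move=> i; case: (leqP i m) => him.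
  rewrite /resC him -HC' /extC.
  have h1 : (i == m.+1) = false by lia.
  have h2 : (i == m.+3) = false by lia.
  by rewrite h1 h2 !orbF.
by rewrite HD0 // /resC leqNgt him.
Qed.

Definition W (m : nat) (U : nat -> nat) : nat -> nat :=
  fun i => (if i == m.+3 then 2 else 0) + (if i == m.+1 then 2 else 0) + U i.

Lemma W3 m U : W m U m.+3 = 2 + U m.+3.
Proof. rewrite /W eqxx; have -> : (m.+3 == m.+1) = false by lia. by []. Qed.
Lemma W1 m U : W m U m.+1 = 2 + U m.+1.
Proof. rewrite /W eqxx; have -> : (m.+1 == m.+3) = false by lia. by []. Qed.
Lemma Wo m U i : i != m.+1 -> i != m.+3 -> W m U i = U i.
Proof. by move=> h1 h3; rewrite /W (negbTE h1) (negbTE h3). Qed.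

Lemma mon0 m V i : monomial m V -> (i < 1) || (m < i) -> V i = 0.
Proof.
move=> HV hi; case E: (V i) => [//|k].
have := HV i; rewrite E => /(_ ltac:(by [])); lia.
Qed.

Lemma cm C i : cover_monomial C i = if C i then 1 else 0.
Proof. by rewrite /cover_monomial; case: (C i). Qed.

Lemma J2_equiv m V : monomial m V -> (in_J2 m.+3 (W m V) <-> in_J2 m V).
Proof.
move=> HV; split.
  move=> [C1 [C2 [H1 [H2 Hd]]]].
  have V2 : V m.+2 = 0 by apply: (mon0 m V m.+2 HV); lia.
  have := Hd m.+2; rewrite /mmul !cm Wo ?V2; [|lia|lia].
  case E1: (C1 m.+2); case E2: (C2 m.+2) => //= _.
  exists (resC m C1), (resC m C2); split; first exact: Lres.
  split; first exact: Lres.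
  move=> i; rewrite /mmul !cm /resC.
  case: (leqP i m) => him /=; last by [].
  have := Hd i; rewrite /mmul !cm Wo //; lia.
move=> [D1 [D2 [H1 [H2 Hd]]]].
exists (extC m D1), (extC m D2); split; first exact: Lext.
split; first exact: Lext.
move=> i; rewrite /mmul !cm /extC.
case: (eqVneq i m.+1) => [->|n1]; first by rewrite !orbT /= W1.
case: (eqVneq i m.+3) => [->|n3]; first by rewrite !orbT /= W3.
rewrite !orbF Wo //.
by have := Hd i; rewrite /mmul !cm.
Qed.

Lemma Wmon m V : monomial m V -> monomial m.+3 (W m V).
Proof.
move=> HV i; case: (eqVneq i m.+1) => [->|n1]; first lia.
case: (eqVneq i m.+3) => [->|n3]; first lia.
rewrite Wo // => /HV; lia.
Qed.

Theorem lemma3p9 (n : nat) (U : nat -> nat) :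
  5 <= n -> monomial n U ->
  (in_G_J2 n (mmul (mmul (xpow n 2) (xpow (n - 2) 2)) U) <-> in_G_J2 (n - 3) U).
Proof.
move=> Hn HU.
have [m Em] : exists m, n = m.+3 by exists (n - 3); lia.
subst n.
have -> : m.+3 - 2 = m.+1 by lia.
have -> : m.+3 - 3 = m by lia.
change (in_G_J2 m.+3 (W m U) <-> in_G_J2 m U).
split.
  move=> [Hmon [HJ Hmin]].
  have HJ' := HJ.
  case: HJ' => [C1 [C2 [H1 [H2 Hd]]]].
  have Heq := Hmin _ _ _ Hd.
  have Heq' : forall i, cover_monomial C1 i + cover_monomial C2 i = W m U i.
    apply: Heq.
      case: H1 => [[Hs1 _] _]; case: H2 => [[Hs2 _] _].
      move=> i; rewrite /mmul !cm.
      case E1: (C1 i); first by have := Hs1 i E1.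
      case E2: (C2 i); first by have := Hs2 i E2.
      by [].
    by exists C1, C2; split; [|split] => // i.
  have := Heq' m.+3; rewrite W3 !cm.
  case E1: (C1 m.+3); case E2: (C2 m.+3) => //= U3.
  have F1 := L4 m C1 H1 E1; have F2 := L4 m C2 H2 E2.
  have := Heq' m.+2; rewrite Wo ?cm ?F1 ?F2 /=; [|lia|lia] => U2.
  have := Heq' m.+1; rewrite W1 !cm.
  case: (C1 m.+1); case: (C2 m.+1) => //= U1.
  have U1z : U m.+1 = 0 by lia.
  have U2z : U m.+2 = 0 by lia.
  have U3z : U m.+3 = 0 by lia.
  have HUm : monomial m U.
    move=> i Hi; have := HU i Hi.
    case: (eqVneq i m.+1) => [E|n1]; first by rewrite E U1z in Hi.
    case: (eqVneq i m.+2) => [E|n2]; first by rewrite E U2z in Hi.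
    case: (eqVneq i m.+3) => [E|n3]; first by rewrite E U3z in Hi.
    lia.
  split; first exact: HUm.
  split; first by apply/(J2_equiv m U HUm).
  move=> V HVm HVJ HVd i.
  have := Hmin (W m V) (Wmon m V HVm) (proj2 (J2_equiv m V HVm) HVJ).
  move=> /(_ _ i).
  case: (eqVneq i m.+1) => [->|n1].
    rewrite !W1; have := HVd m.+1; lia.
  case: (eqVneq i m.+3) => [->|n3].
    rewrite !W3; have := HVd m.+3; lia.
  rewrite !Wo //; apply.
  move=> j; have := HVd j; rewrite /W; lia.
move=> [HUm [HUJ HUmin]].
split; first exact: Wmon.
split; first by apply/(J2_equiv m U HUm).
move=> v Hvm [C1 [C2 [H1 [H2 Hd]]]] Hvd i.
have U0 : forall j, m < j -> U j = 0 by move=> j hj; apply: (mon0 m U j HUm); lia.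
have v2 : v m.+2 = 0.
  have := Hvd m.+2; rewrite Wo ?U0; lia.
have := Hd m.+2; rewrite /mmul !cm v2.
case E1: (C1 m.+2); case E2: (C2 m.+2) => //= _.
have [A1 A3] := L3 m C1 H1 E1; have [B1 B3] := L3 m C2 H2 E2.
have v1 : 2 <= v m.+1 by have := Hd m.+1; rewrite /mmul !cm A1 B1.
have v3 : 2 <= v m.+3 by have := Hd m.+3; rewrite /mmul !cm A3 B3.
pose V := fun j => if j <= m then v j else 0.
have HV : forall j, V j = U j.
  apply: HUmin.
  - move=> j; rewrite /V; case: (leqP j m) => hj // /Hvm; lia.
  - exists (resC m C1), (resC m C2); split; first exact: Lres.
    split; first exact: Lres.
    move=> j; rewrite /mmul !cm /resC /V.
    case: (leqP j m) => hj //=.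
    by have := Hd j; rewrite /mmul !cm.
  - move=> j; rewrite /V; case: (leqP j m) => hj //.
    have := Hvd j; rewrite Wo //; lia.
case: (eqVneq i m.+1) => [->|n1].
  have := Hvd m.+1; rewrite W1 U0; lia.
case: (eqVneq i m.+3) => [->|n3].
  have := Hvd m.+3; rewrite W3 U0; lia.
rewrite Wo //.
case: (leqP i m) => hi.
  by rewrite -HV /V hi.
rewrite U0 //; case: (eqVneq i m.+2) => [->//|n2].
by apply: (mon0 m.+3 v i Hvm); lia.
Qed.
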